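(* Let $H$ be a group and $X=\{x_1,\dots,x_n\}$ a finite set of elements of $H$. Let $H\trianglerighteq N_1\trianglerighteq N_2\trianglerighteq\cdots$ be a central series of $H$ such that $[H,N_i]=N_{i+1}$ for all $i\ge1$. Suppose that for every $i\ge1$ the quotient $H/N_i$ is normally generated by $\{x_1N_i,\dots,x_nN_i\}$. Let $\Gamma=\varprojlim_i H/N_i$ and let $h:H\to\Gamma$ be the natural map. Then $\Gamma$ is normally generated by $\{h(x_1),\dots,h(x_n)\}$.
   Context: A group is normally generated by a subset if the smallest normal subgroup containing that subset is the whole group. *)

(* Defs.v *)
From Stdlib Require Import Arith.


Record Group := {
  carrier :> Type;
  gmul : carrier -> carrier -> carrier;
  ginv : carrier -> carrier;
  gone : carrier;
  gmul_assoc : forall a b c, gmul a (gmul b c) = gmul (gmul a b) c;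
  gmul_1l : forall a, gmul gone a = a;
  gmul_1r : forall a, gmul a gone = a;
  gmul_Vl : forall a, gmul (ginv a) a = gone;
  gmul_Vr : forall a, gmul a (ginv a) = gone
}.

Arguments gmul {g} _ _.
Arguments ginv {g} _.
Arguments gone {g}.

Definition is_subgroup (H : Group) (K : H -> Prop) : Prop :=
  K gone /\ (forall a b, K a -> K b -> K (gmul a b)) /\ (forall a, K a -> K (ginv a)).

Definition is_normal_subgroup (H : Group) (K : H -> Prop) : Prop :=
  is_subgroup H K /\ (forall a g, K a -> K (gmul (ginv g) (gmul a g))).

Definition gen_subgroup (H : Group) (S : H -> Prop) : H -> Prop :=
  fun a => forall K : H -> Prop, is_subgroup H K -> (forall s, S s -> K s) -> K a.

Definition commg (H : Group) (a b : H) : H :=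
  gmul (ginv a) (gmul (ginv b) (gmul a b)).

Definition comm_subgroup (H : Group) (N : H -> Prop) : H -> Prop :=
  gen_subgroup H (fun c => exists (a m : H), N m /\ c = commg H a m).

(* Normal generation for a group presented as a "setoid group": elements of
   type T lying in the domain [dom], identified modulo the equivalence [E],
   with operations [mul], [inv], unit [one]. *)
Definition setoid_normally_generated (T : Type) (dom : T -> Prop)
    (E : T -> T -> Prop) (mul : T -> T -> T) (inv : T -> T) (one : T)
    (S : T -> Prop) : Prop :=
  forall K : T -> Prop,
    (forall a b, dom a -> dom b -> E a b -> K a -> K b) ->
    K one ->
    (forall a b, dom a -> dom b -> K a -> K b -> K (mul a b)) ->
    (forall a, dom a -> K a -> K (inv a)) ->
    (forall a g, dom a -> dom g -> K a -> K (mul (inv g) (mul a g))) ->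
    (forall s, dom s -> S s -> K s) ->
    forall a, dom a -> K a.

Arguments setoid_normally_generated {T}.

(* The quotient H/N (N normal): elements of H modulo a ~ b iff a^-1 b in N.
   [quotient_normally_generated H N S] : H/N is normally generated by the
   image {sN | s in S}. *)
Definition quotient_normally_generated (H : Group) (N : H -> Prop)
    (S : H -> Prop) : Prop :=
  setoid_normally_generated (fun _ : carrier H => True)
    (fun a b => N (gmul (ginv a) b)) (@gmul H) (@ginv H) (@gone H) S.

(* The inverse limit Gamma = lim_i H/N_i of the tower H/N_0 <- H/N_1 <- ...
   (index i here corresponds to N_{i+1} in the paper).  An element is a
   compatible sequence of cosets (g_i N_i)_i, represented by g : nat -> H with
   g_{i+1} N_i = g_i N_i; two representatives are equal iff g_i N_i = g'_i N_i
   for all i; operations are coordinatewise. *)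
Definition invlim_dom (H : Group) (N : nat -> H -> Prop) (g : nat -> H) : Prop :=
  forall i, N i (gmul (ginv (g (S i))) (g i)).

Definition invlim_eq (H : Group) (N : nat -> H -> Prop) (g g' : nat -> H) : Prop :=
  forall i, N i (gmul (ginv (g i)) (g' i)).

Definition invlim_mul (H : Group) (g g' : nat -> H) : nat -> H :=
  fun i => gmul (g i) (g' i).

Definition invlim_inv (H : Group) (g : nat -> H) : nat -> H :=
  fun i => ginv (g i).

Definition invlim_one (H : Group) : nat -> H := fun _ => gone.

Definition invlim_nat (H : Group) (a : H) : nat -> H := fun _ => a.

Definition invlim_normally_generated (H : Group) (N : nat -> H -> Prop)
    (S' : (nat -> H) -> Prop) : Prop :=
  setoid_normally_generated (invlim_dom H N) (invlim_eq H N)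
    (invlim_mul H) (invlim_inv H) (invlim_one H) S'.

(* Main.v *)
Require Import Defs.
From Stdlib Require Import Arith Setoid Morphisms Lia ClassicalEpsilon.

Notation "a ** b" := (gmul a b) (at level 40, left associativity).
Notation "a ⁻¹" := (ginv a) (at level 3, format "a ⁻¹").

Lemma cancel_r (H : Group) (a b : H) : a ** b ** b⁻¹ = a.
Proof. rewrite <- gmul_assoc, gmul_Vr, gmul_1r; reflexivity. Qed.
Lemma cancel_r2 (H : Group) (a b : H) : a ** b⁻¹ ** b = a.
Proof. rewrite <- gmul_assoc, gmul_Vl, gmul_1r; reflexivity. Qed.
Lemma inv_unique (H : Group) (a b : H) : a ** b = gone -> b = a⁻¹.
Proof. intro e. rewrite <- (gmul_1l _ b), <- (gmul_Vl _ a), <- gmul_assoc, e, gmul_1r. reflexivity. Qed.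
Lemma inv_mul (H : Group) (a b : H) : (a ** b)⁻¹ = b⁻¹ ** a⁻¹.
Proof. symmetry. apply inv_unique. rewrite !gmul_assoc, cancel_r, gmul_Vr. reflexivity. Qed.
Lemma inv_inv (H : Group) (a : H) : a⁻¹⁻¹ = a.
Proof. symmetry. apply inv_unique. apply gmul_Vl. Qed.
Lemma inv_one (H : Group) : (@gone H)⁻¹ = gone.
Proof. symmetry. apply inv_unique. apply gmul_1l. Qed.

Ltac gsimpl := repeat (rewrite ?inv_mul, ?inv_inv, ?inv_one, ?gmul_assoc, ?cancel_r, ?cancel_r2,
   ?gmul_1l, ?gmul_1r, ?gmul_Vl, ?gmul_Vr).

Lemma test (H : Group) (a b c : H) : (a ** b⁻¹ ** c)⁻¹ ** a ** (b ** c) = c⁻¹ ** b ** b ** c.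
Proof. gsimpl. reflexivity. Qed.


Lemma ns1 (H : Group) N (hN : is_normal_subgroup H N) : N gone.
Proof. apply hN. Qed.
Lemma nsM (H : Group) N (hN : is_normal_subgroup H N) a b : N a -> N b -> N (a ** b).
Proof. apply hN. Qed.
Lemma nsV (H : Group) N (hN : is_normal_subgroup H N) a : N a -> N a⁻¹.
Proof. apply hN. Qed.
Lemma nsJ (H : Group) N (hN : is_normal_subgroup H N) a g : N a -> N (g⁻¹ ** a ** g).
Proof. intro h. rewrite <- gmul_assoc. apply hN, h. Qed.
Lemma nsJ' (H : Group) N (hN : is_normal_subgroup H N) a g : N a -> N (g ** a ** g⁻¹).
Proof. intro h. rewrite <- (inv_inv _ g) at 1. apply nsJ; auto. Qed.
Lemma nsVV (H : Group) N (hN : is_normal_subgroup H N) a : N a⁻¹ -> N a.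
Proof. intro h. rewrite <- (inv_inv _ a). apply nsV; auto. Qed.

Definition eqv (H : Group) (N : H -> Prop) (a b : H) := N (a⁻¹ ** b).

Lemma eqv_refl (H : Group) N (hN : is_normal_subgroup H N) a : eqv H N a a.
Proof. unfold eqv. gsimpl. apply hN. Qed.
Lemma eqv_sym (H : Group) N (hN : is_normal_subgroup H N) a b : eqv H N a b -> eqv H N b a.
Proof. unfold eqv. intro h. apply nsV in h; auto. gsimpl. revert h; gsimpl; auto. Qed.
Lemma eqv_trans (H : Group) N (hN : is_normal_subgroup H N) a b c :
  eqv H N a b -> eqv H N b c -> eqv H N a c.
Proof. unfold eqv. intros h1 h2. pose proof (nsM _ _ hN _ _ h1 h2) as h. revert h. gsimpl. auto. Qed.
Lemma eqv_mul (H : Group) N (hN : is_normal_subgroup H N) a a' b b' :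
  eqv H N a a' -> eqv H N b b' -> eqv H N (a ** b) (a' ** b').
Proof. unfold eqv. intros h1 h2.
  pose proof (nsM _ _ hN _ _ (nsJ _ _ hN _ b h1) h2) as h. revert h. gsimpl. auto. Qed.
Lemma eqv_inv (H : Group) N (hN : is_normal_subgroup H N) a b :
  eqv H N a b -> eqv H N a⁻¹ b⁻¹.
Proof. unfold eqv. intros h1. apply nsV in h1; auto.
  pose proof (nsJ' _ _ hN _ a h1) as h. revert h. gsimpl. auto. Qed.
Lemma eqv_of (H : Group) N (hN : is_normal_subgroup H N) a : N a -> eqv H N gone a.
Proof. unfold eqv. gsimpl. auto. Qed.
Lemma eqv_to (H : Group) N (hN : is_normal_subgroup H N) a : eqv H N gone a -> N a.
Proof. unfold eqv. gsimpl. auto. Qed.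
Lemma eqv_eq (H : Group) N (hN : is_normal_subgroup H N) a b : a = b -> eqv H N a b.
Proof. intros ->. apply eqv_refl; auto. Qed.

Existing Class is_normal_subgroup.

#[export] Instance eqv_Equiv (H : Group) N (hN : is_normal_subgroup H N) : Equivalence (eqv H N).
Proof. split; intro; intros; eauto using eqv_refl, eqv_sym, eqv_trans. Qed.
#[export] Instance eqv_mul_Proper (H : Group) N (hN : is_normal_subgroup H N) :
  Proper (eqv H N ==> eqv H N ==> eqv H N) (@gmul H).
Proof. intros ? ? ? ? ? ?; apply eqv_mul; auto. Qed.
#[export] Instance eqv_inv_Proper (H : Group) N (hN : is_normal_subgroup H N) :
  Proper (eqv H N ==> eqv H N) (@ginv H).
Proof. intros ? ? ?; apply eqv_inv; auto. Qed.

Lemma test2 (H : Group) N (hN : is_normal_subgroup H N) a b c : eqv H N a b -> eqv H N (c ** a ** c) (c ** b ** c).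
Proof. intro e. rewrite e. reflexivity. Qed.

Lemma comm_sub_gen (H : Group) (M : H -> Prop) a m : M m -> comm_subgroup H M (commg H a m).
Proof. intros hm K _ HS. apply HS. exists a, m. auto. Qed.

Lemma commg_inv (H : Group) (a b : H) : commg H b a = (commg H a b)⁻¹.
Proof. unfold commg. gsimpl. reflexivity. Qed.

Fixpoint P (H : Group) (x m : nat -> H) (k : nat) : H :=
  match k with 0 => gone | S k => P H x m k ** commg H (x k) (m k) end.

Lemma P_ext (H : Group) x m m' k : (forall j, m j = m' j) -> P H x m k = P H x m' k.
Proof. intro e. induction k; simpl; auto. rewrite IHk, e. reflexivity. Qed.

Lemma P_one (H : Group) x k : P H x (fun _ => gone) k = gone.
Proof. induction k; simpl; auto. rewrite IHk. unfold commg. gsimpl. reflexivity. Qed.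

Lemma P_delta (H : Group) x m0 j k :
  P H x (fun l => if l =? j then m0 else gone) k = if j <? k then commg H (x j) m0 else gone.
Proof. induction k; simpl; auto. rewrite IHk.
  destruct (Nat.eqb_spec k j) as [->|ne].
  - rewrite Nat.ltb_irrefl. replace (j <? S j) with true. gsimpl. reflexivity.
    symmetry; apply Nat.ltb_lt; auto.
  - destruct (Nat.ltb_spec j k); destruct (Nat.ltb_spec j (S k)); try lia;
    unfold commg; gsimpl; reflexivity.
Qed.

Definition Hyps (H : Group) (N : nat -> H -> Prop) :=
  (forall i, is_normal_subgroup H (N i)) /\
  (forall i a, N (S i) a -> N i a) /\
  (forall i a, comm_subgroup H (N i) a <-> N (S i) a).


Lemma hy_norm (H : Group) N (hy : Hyps H N) i : is_normal_subgroup H (N i).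
Proof. apply hy. Qed.

Lemma comm_in (H : Group) N (hy : Hyps H N) i a m : N i m -> N (S i) (commg H a m).
Proof. intro h. apply hy. apply comm_sub_gen; auto. Qed.
Lemma comm_in' (H : Group) N (hy : Hyps H N) i a m : N i m -> N (S i) (commg H m a).
Proof. intro h. rewrite commg_inv. apply nsV. apply hy. apply comm_in; auto. Qed.

Lemma central (H : Group) N (hy : Hyps H N) i y g : N (S i) y ->
  eqv H (N (S (S i))) (y ** g) (g ** y).
Proof. intro h. unfold eqv. pose proof (comm_in _ _ hy _ g _ h) as c. revert c.
  unfold commg. gsimpl. auto. Qed.

Lemma conj_inv (H : Group) N (hy : Hyps H N) i y g : N (S i) y ->
  eqv H (N (S (S i))) (g⁻¹ ** y ** g) y.
Proof. intro h. pose proof (hy_norm _ _ hy (S (S i))).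
  rewrite <- gmul_assoc. rewrite (central _ _ hy i y g h). gsimpl. reflexivity. Qed.

Lemma P_in (H : Group) N (hy : Hyps H N) i x m k : (forall j, N i (m j)) -> N (S i) (P H x m k).
Proof. intro hm. induction k; simpl. apply ns1, hy. apply nsM. apply hy. auto. apply comm_in; auto. Qed.

Lemma comm_mul_r (H : Group) N (hy : Hyps H N) i a m m' : N i m -> N i m' ->
  eqv H (N (S (S i))) (commg H a (m ** m')) (commg H a m ** commg H a m').
Proof. intros h h'. pose proof (hy_norm _ _ hy (S (S i))).
  transitivity (commg H a m' ** (m'⁻¹ ** commg H a m ** m')).
  { apply eqv_eq; auto. unfold commg. gsimpl. reflexivity. }
  rewrite (conj_inv _ _ hy i); [|apply comm_in; auto].
  apply central; auto. apply comm_in; auto. Qed.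

Lemma comm_mul_l (H : Group) N (hy : Hyps H N) i a b m : N i m ->
  eqv H (N (S (S i))) (commg H (a ** b) m) (commg H a m ** commg H b m).
Proof. intros h. pose proof (hy_norm _ _ hy (S (S i))).
  transitivity (b⁻¹ ** commg H a m ** b ** commg H b m).
  { apply eqv_eq; auto. unfold commg. gsimpl. reflexivity. }
  rewrite (conj_inv _ _ hy i); [reflexivity|apply comm_in; auto]. Qed.

Lemma P_mul (H : Group) N (hy : Hyps H N) i x m m' k :
  (forall j, N i (m j)) -> (forall j, N i (m' j)) ->
  eqv H (N (S (S i))) (P H x (fun j => m j ** m' j) k) (P H x m k ** P H x m' k).
Proof. intros hm hm'. pose proof (hy_norm _ _ hy (S (S i))).
  induction k; simpl. { apply eqv_eq; auto. gsimpl. reflexivity. }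
  rewrite IHk, (comm_mul_r _ _ hy i); auto.
  set (A := P H x m k). set (B := P H x m' k).
  set (c := commg H (x k) (m k)). set (c' := commg H (x k) (m' k)).
  transitivity (A ** (B ** c) ** c'). { apply eqv_eq; auto. gsimpl. reflexivity. }
  rewrite (central _ _ hy i B c) by (apply (P_in _ _ hy); auto).
  apply eqv_eq; auto. gsimpl. reflexivity. Qed.

Lemma P_inv (H : Group) N (hy : Hyps H N) i x m k :
  (forall j, N i (m j)) ->
  eqv H (N (S (S i))) (P H x (fun j => (m j)⁻¹) k) (P H x m k)⁻¹.
Proof. intros hm. pose proof (hy_norm _ _ hy (S (S i))).
  assert (hi : forall j, N i (m j)⁻¹) by (intro; apply nsV; auto; apply hy).
  pose proof (P_mul _ _ hy i x m (fun j => (m j)⁻¹) k hm hi) as e.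
  rewrite (P_ext _ x (fun j => m j ** (m j)⁻¹) (fun _ => gone)) in e by (intro; apply gmul_Vr).
  rewrite P_one in e.
  transitivity ((P H x m k)⁻¹ ** (P H x m k ** P H x (fun j => (m j)⁻¹) k)).
  { apply eqv_eq; auto. gsimpl. reflexivity. }
  rewrite <- e. apply eqv_eq; auto. gsimpl. reflexivity. Qed.

Definition Q (H : Group) N x n i c :=
  exists m, (forall j, N i (m j)) /\ eqv H (N (S (S i))) c (P H x m n).

Lemma Q_compat (H : Group) N (hy : Hyps H N) x n i c c' :
  eqv H (N (S (S i))) c c' -> Q H N x n i c -> Q H N x n i c'.
Proof. intros e [m [hm e']]. pose proof (hy_norm _ _ hy (S (S i))). exists m. split; auto.
  rewrite <- e; auto. Qed.

Lemma Q_one (H : Group) N (hy : Hyps H N) x n i : Q H N x n i gone.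
Proof. exists (fun _ => gone). split. intro; apply ns1, hy. rewrite P_one. apply eqv_refl, hy. Qed.

Lemma Q_mul (H : Group) N (hy : Hyps H N) x n i a b :
  Q H N x n i a -> Q H N x n i b -> Q H N x n i (a ** b).
Proof. intros [m [hm e]] [m' [hm' e']]. pose proof (hy_norm _ _ hy (S (S i))).
  exists (fun j => m j ** m' j). split. intro; apply nsM; auto; apply hy.
  rewrite (P_mul _ _ hy i); auto. rewrite e, e'. reflexivity. Qed.

Lemma Q_inv (H : Group) N (hy : Hyps H N) x n i a :
  Q H N x n i a -> Q H N x n i a⁻¹.
Proof. intros [m [hm e]]. pose proof (hy_norm _ _ hy (S (S i))).
  exists (fun j => (m j)⁻¹). split. intro; apply nsV; auto; apply hy.
  rewrite (P_inv _ _ hy i); auto. rewrite e. reflexivity. Qed.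

Lemma KL (H : Group) N (hy : Hyps H N) n x
  (hgen : forall i, quotient_normally_generated H (N i) (fun g => exists j, j < n /\ g = x j))
  i e : N (S i) e -> Q H N x n i e.
Proof.
  intro he. apply hy in he. pose proof (hy_norm _ _ hy (S (S i))) as hn2.
  pose proof (hy_norm _ _ hy (S i)) as hn1.
  pose proof (hy_norm _ _ hy i) as hn0.
  assert (R : forall a m0, N i m0 -> Q H N x n i (commg H a m0)).
  { intro a0. pattern a0. apply (hgen (S i)); auto; clear a0.
    - intros a b _ _ hab Ra m0 hm0. apply (Q_compat _ _ hy) with (commg H a m0); auto.
      replace b with (a ** (a⁻¹ ** b)) by (gsimpl; reflexivity).
      rewrite (comm_mul_l _ _ hy i); auto.
      rewrite <- (eqv_of _ _ hn2 (commg H (a⁻¹ ** b) m0)). gsimpl. reflexivity.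
      apply (comm_in' _ _ hy (S i)); auto.
    - intros m0 _. apply (Q_compat _ _ hy) with gone. apply eqv_eq; auto. unfold commg. gsimpl. reflexivity.
      apply Q_one; auto.
    - intros a b _ _ Ra Rb m0 hm0. apply (Q_compat _ _ hy) with (commg H a m0 ** commg H b m0).
      symmetry. apply (comm_mul_l _ _ hy); auto. apply Q_mul; auto.
    - intros a _ Ra m0 hm0. apply (Q_compat _ _ hy) with (commg H a m0)⁻¹. 2: apply Q_inv; auto.
      transitivity ((commg H a⁻¹ m0 ** commg H a m0) ** (commg H a m0)⁻¹).
      2: { apply eqv_eq; auto. gsimpl. reflexivity. }
      rewrite <- (comm_mul_l _ _ hy); auto. gsimpl. apply eqv_eq; auto. unfold commg. gsimpl. reflexivity.
    - intros a g _ _ Ra m0 hm0. apply (Q_compat _ _ hy) with (commg H a m0); auto.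
      rewrite !(comm_mul_l _ _ hy i); auto.
      rewrite gmul_assoc. rewrite <- (central _ _ hy i (commg H a m0)) by (apply comm_in; auto).
      rewrite <- gmul_assoc. rewrite <- (comm_mul_l _ _ hy i); auto.
      apply eqv_eq; auto. unfold commg. gsimpl. reflexivity.
    - intros s _ [j [hj ->]] m0 hm0.
      exists (fun l => if l =? j then m0 else gone). split.
      + intro l. destruct (l =? j); auto. apply ns1, hy.
      + rewrite P_delta. replace (j <? n) with true by (symmetry; apply Nat.ltb_lt; auto). reflexivity. }
  apply he. repeat split.
  - apply Q_one; auto.
  - intros; apply Q_mul; auto.
  - intros; apply Q_inv; auto.
  - intros c [a [m [hm ->]]]. apply R; auto.
Qed.

Lemma comm_mul_r' (H : Group) N (hy : Hyps H N) i a m v : N i m ->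
  eqv H (N (S (S i))) (commg H a (m ** v)) (commg H a v ** commg H a m).
Proof. intros h. pose proof (hy_norm _ _ hy (S (S i))).
  transitivity (commg H a v ** (v⁻¹ ** commg H a m ** v)).
  { apply eqv_eq; auto. unfold commg. gsimpl. reflexivity. }
  rewrite (conj_inv _ _ hy i); [reflexivity|apply comm_in; auto]. Qed.

Lemma P_mul_l (H : Group) N (hy : Hyps H N) i x m v k :
  (forall j, N i (m j)) ->
  eqv H (N (S (S i))) (P H x (fun j => m j ** v j) k) (P H x v k ** P H x m k).
Proof. intros hm. pose proof (hy_norm _ _ hy (S (S i))).
  induction k; simpl. { apply eqv_eq; auto. gsimpl. reflexivity. }
  rewrite IHk, (comm_mul_r' _ _ hy i); auto.
  set (A := P H x v k). set (B := P H x m k).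
  set (c := commg H (x k) (v k)). set (c' := commg H (x k) (m k)).
  transitivity (A ** (B ** c) ** c'). { apply eqv_eq; auto. gsimpl. reflexivity. }
  rewrite (central _ _ hy i B c) by (apply (P_in _ _ hy); auto).
  apply eqv_eq; auto. gsimpl. reflexivity. Qed.

Definition stepm (H : Group) N x n (g : nat -> H) i (v : nat -> H) : nat -> H :=
  epsilon (inhabits (fun _ => gone))
    (fun m => (forall j, N i (m j)) /\
       eqv H (N (S (S i))) ((P H x v n)⁻¹ ** g (S (S i))) (P H x m n)).

Fixpoint mu (H : Group) N x n (g : nat -> H) i : nat -> H :=
  match i with
  | 0 => fun _ => gone
  | S i => fun j => stepm H N x n g i (mu H N x n g i) j ** mu H N x n g i j
  end.

Lemma mu_spec (H : Group) N (hy : Hyps H N) n x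
  (hgen : forall i, quotient_normally_generated H (N i) (fun g => exists j, j < n /\ g = x j))
  g (hg : invlim_dom H N g) (h1 : N 1 (g 1)) i :
  eqv H (N (S i)) (g (S i)) (P H x (mu H N x n g i) n) /\
  (forall j, N i (stepm H N x n g i (mu H N x n g i) j)) /\
  eqv H (N (S (S i))) ((P H x (mu H N x n g i) n)⁻¹ ** g (S (S i)))
     (P H x (stepm H N x n g i (mu H N x n g i)) n).
Proof.
  assert (D : forall i, eqv H (N (S i)) (g (S i)) (P H x (mu H N x n g i) n) ->
     (forall j, N i (stepm H N x n g i (mu H N x n g i) j)) /\
     eqv H (N (S (S i))) ((P H x (mu H N x n g i) n)⁻¹ ** g (S (S i)))
       (P H x (stepm H N x n g i (mu H N x n g i)) n)).
  { intros k hk. unfold stepm. apply epsilon_spec.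
    pose proof (hy_norm _ _ hy (S k)).
    apply (KL _ _ hy n x hgen k).
    change (eqv H (N (S k)) (P H x (mu H N x n g k) n) (g (S (S k)))).
    rewrite <- hk. symmetry. apply hg. }
  induction i.
  - assert (E : eqv H (N 1) (g 1) (P H x (mu H N x n g 0) n)).
    { simpl mu. rewrite P_one. pose proof (hy_norm _ _ hy 1). symmetry. apply eqv_of; auto. }
    split; auto.
  - destruct IHi as [E [hm E2]]. pose proof (hy_norm _ _ hy (S (S i))).
    assert (E' : eqv H (N (S (S i))) (g (S (S i))) (P H x (mu H N x n g (S i)) n)).
    { simpl mu. rewrite (P_mul_l _ _ hy i); auto. rewrite <- E2.
      apply eqv_eq; auto. gsimpl. reflexivity. }
    split; auto.
Qed.

Lemma dom_mul (H : Group) N (hy : Hyps H N) a b :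
  invlim_dom H N a -> invlim_dom H N b -> invlim_dom H N (invlim_mul H a b).
Proof. intros ha hb i. pose proof (hy_norm _ _ hy i).
  apply (eqv_mul _ _ _ _ _ _ _ (ha i) (hb i)). Qed.
Lemma dom_inv (H : Group) N (hy : Hyps H N) a :
  invlim_dom H N a -> invlim_dom H N (invlim_inv H a).
Proof. intros ha i. pose proof (hy_norm _ _ hy i).
  apply (eqv_inv _ _ _ _ _ (ha i)). Qed.
Lemma dom_nat (H : Group) N (hy : Hyps H N) c : invlim_dom H N (invlim_nat H c).
Proof. intros i. apply (eqv_refl _ _ (hy_norm _ _ hy i)). Qed.
Lemma dom_one (H : Group) N (hy : Hyps H N) : invlim_dom H N (invlim_one H).
Proof. intros i. apply (eqv_refl _ _ (hy_norm _ _ hy i)). Qed.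
Lemma eq_E (H : Group) N (hy : Hyps H N) a b : (forall i, a i = b i) -> invlim_eq H N a b.
Proof. intros e i. apply (eqv_eq _ _ (hy_norm _ _ hy i)); auto. Qed.

Definition commG (H : Group) (a b : nat -> H) :=
  invlim_mul H (invlim_inv H a) (invlim_mul H (invlim_inv H b) (invlim_mul H a b)).

Fixpoint PG (H : Group) (x : nat -> H) (mus : nat -> nat -> H) k : nat -> H :=
  match k with 0 => invlim_one H
  | S k => invlim_mul H (PG H x mus k) (commG H (invlim_nat H (x k)) (mus k)) end.

Lemma PG_eq (H : Group) x mus k i : PG H x mus k i = P H x (fun j => mus j i) k.
Proof. induction k; simpl; auto. unfold invlim_mul at 1. rewrite IHk. reflexivity. Qed.

Theorem mainTheorem2 (H : Group) (n : nat) (x : nat -> H)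
    (N : nat -> H -> Prop)
    (hN_normal : forall i, is_normal_subgroup H (N i))
    (hN_desc : forall i a, N (S i) a -> N i a)
    (hN_comm : forall i a, comm_subgroup H (N i) a <-> N (S i) a)
    (hgen : forall i,
        quotient_normally_generated H (N i) (fun g => exists j, j < n /\ g = x j)) :
  invlim_normally_generated H N
    (fun gam => exists j, j < n /\ gam = invlim_nat H (x j)).
Proof.
  assert (hy : Hyps H N) by (split; auto).
  intros K Kc K1 Km Ki Kj Kg.
  assert (A : forall g, invlim_dom H N g -> N 1 (g 1) -> K g).
  { intros g hg h1.
    set (mus := fun j i => mu H N x n g i j).
    assert (dmus : forall j, invlim_dom H N (mus j)).
    { intros j i. destruct (mu_spec _ _ hy n x hgen g hg h1 i) as [_ [hm _]].
      unfold mus. simpl mu. pose proof (hy_norm _ _ hy i).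
      set (v := mu H N x n g i j). set (s := stepm H N x n g i (mu H N x n g i) j).
      replace ((s ** v)⁻¹ ** v) with (v⁻¹ ** s⁻¹ ** v) by (gsimpl; reflexivity).
      apply nsJ; auto. apply nsV; auto. apply hm. }
    assert (KP : forall k, k <= n -> invlim_dom H N (PG H x mus k) /\ K (PG H x mus k)).
    { induction k; intros hk. split; [apply dom_one; auto | auto].
      destruct IHk as [d1 k1]. lia.
      assert (dc : invlim_dom H N (commG H (invlim_nat H (x k)) (mus k))).
      { unfold commG. repeat apply dom_mul; auto; try apply dom_inv; auto; apply dom_nat; auto. }
      split. apply dom_mul; auto.
      simpl. apply Km; auto. unfold commG. apply Km; auto.
      apply dom_inv, dom_nat; auto. apply dom_mul; auto. apply dom_inv; auto. apply dom_mul; auto. apply dom_nat; auto.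
      apply Ki; auto. apply dom_nat; auto. apply Kg. apply dom_nat; auto. exists k; split; [lia|reflexivity].
      apply Kj; auto. apply dom_nat; auto. apply Kg. apply dom_nat; auto. exists k; split; [lia|reflexivity]. }
    destruct (KP n (le_n _)) as [dP kP].
    apply (Kc _ _ dP hg); auto.
    intro i. rewrite PG_eq. destruct (mu_spec _ _ hy n x hgen g hg h1 i) as [E _].
    pose proof (hy_norm _ _ hy i).
    change (eqv H (N i) (P H x (mu H N x n g i) n) (g i)).
    assert (E' : eqv H (N i) (g (S i)) (P H x (mu H N x n g i) n)) by (apply hN_desc, E).
    rewrite <- E'. apply hg. }
  assert (hn1 := hy_norm _ _ hy 1).
  assert (Bh : forall c m, N 1 m -> K (invlim_nat H (c ** m))).
  { intro c. pattern c. apply (hgen 1); auto; clear c.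
    - intros a b _ _ hab Ka m hm.
      apply (Kc (invlim_nat H (a ** (a⁻¹ ** b ** m)))); try apply dom_nat; auto.
      apply eq_E; auto. intro; unfold invlim_nat; gsimpl; reflexivity.
      apply Ka. apply nsM; auto.
    - intros m hm. apply A. apply dom_nat; auto. unfold invlim_nat. rewrite gmul_1l; auto.
    - intros a b _ _ Ka Kb m hm.
      apply (Kc (invlim_mul H (invlim_nat H (a ** gone)) (invlim_nat H (b ** m)))).
      apply dom_mul; try apply dom_nat; auto. apply dom_nat; auto.
      apply eq_E; auto. intro; unfold invlim_mul, invlim_nat; gsimpl; reflexivity.
      apply Km; try apply dom_nat; auto. apply Ka. apply ns1; auto.
    - intros a _ Ka m hm.
      apply (Kc (invlim_inv H (invlim_nat H (a ** (a⁻¹ ** m⁻¹ ** a))))).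
      apply dom_inv; try apply dom_nat; auto. apply dom_nat; auto.
      apply eq_E; auto. intro; unfold invlim_inv, invlim_nat; gsimpl; reflexivity.
      apply Ki. apply dom_nat; auto. apply Ka. apply nsJ; auto. apply nsV; auto.
    - intros a g _ _ Ka m hm.
      apply (Kc (invlim_mul H (invlim_inv H (invlim_nat H g))
                (invlim_mul H (invlim_nat H (a ** (g ** m ** g⁻¹))) (invlim_nat H g)))).
      apply dom_mul; auto. apply dom_inv; try apply dom_nat; auto. apply dom_mul; try apply dom_nat; auto.
      apply dom_nat; auto.
      apply eq_E; auto. intro; unfold invlim_mul, invlim_inv, invlim_nat; gsimpl; reflexivity.
      apply Kj; try apply dom_nat; auto. apply Ka. apply nsJ'; auto.
    - intros s _ [j [hj ->]] m hm.
      apply (Kc (invlim_mul H (invlim_nat H (x j)) (invlim_nat H m))).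
      apply dom_mul; try apply dom_nat; auto. apply dom_nat; auto.
      apply eq_E; auto.
      apply Km; try apply dom_nat; auto. apply Kg. apply dom_nat; auto. exists j; auto.
      apply A. apply dom_nat; auto. exact hm. }
  intros a ha.
  set (g := fun i => (a 1)⁻¹ ** a i).
  assert (dg : invlim_dom H N g).
  { intro i. unfold g. pose proof (hy_norm _ _ hy i). pose proof (ha i) as hi. unfold eqv.
    revert hi. gsimpl. auto. }
  apply (Kc (invlim_mul H (invlim_nat H (a 1 ** gone)) g)).
  apply dom_mul; auto. apply dom_nat; auto. auto.
  apply eq_E; auto. intro; unfold invlim_mul, invlim_nat, g; gsimpl; reflexivity.
  apply Km; auto. apply dom_nat; auto. apply Bh. apply ns1; auto.
  apply A; auto. unfold g. rewrite gmul_Vl. apply ns1; auto.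
Qed.
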